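(* Let $(X,d,\kappa)$ be a complete digital metric space, and assume either that $X$ is finite or that $d$ is an $\ell_p$ metric for some $1\le p\le\infty$. Let $T:X\to X$ be a bijective generalized $\alpha$-$\psi$-expansive mapping (with associated $\alpha:X\times X\to[0,\infty)$ and $\psi\in\Psi$) such that (1) $T^{-1}$ is $\alpha$-admissible, and (2) there exists $x_0\in X$ such that $\alpha(x_0,T^{-1}(x_0))\ge 1$. Then $T$ has a fixed point.
   Context: A digital metric space is a triple $(X,d,\kappa)$ where $X\subset\mathbb{Z}^n$ for some positive integer $n$, $\kappa$ is an adjacency relation on $X$, and $d$ is a metric on $X$. The $\ell_p$ metric on $\mathbb{Z}^n$ is $d(x,y)=(\sum_i|x_i-y_i|^p)^{1/p}$ for $1\le p<\infty$ and $\max_i|x_i-y_i|$ for $p=\infty$. $\Psi$ is the set of nondecreasing functions $\psi:[0,\infty)\to[0,\infty)$ with $\sum_{n=1}^\infty\psi^n(t)<\infty$ for all $t>0$ ($\psi^n$ the $n$-fold composition). A map $R:X\to X$ is $\alpha$-admissible (for $\alpha:X\times X\to[0,\infty)$) if $\alpha(x,y)\ge1$ implies $\alpha(R(x),R(y))\ge1$. $T$ is a generalized $\alpha$-$\psi$-expansive mapping if there exist $\alpha:X\times X\to[0,\infty)$ and $\psi\in\Psi$ such that for all $x,y\in X$, $\psi(d(T(x),T(y)))\ge\alpha(x,y)M(x,y)$, where $M(x,y)=\max\{d(x,y),\ \tfrac{d(x,T(x))+d(y,T(y))}{2},\ \tfrac{d(x,T(y))+d(y,T(x))}{2}\}$.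 *)

(* Defs.v *)
From HB Require Import structures.
From mathcomp Require Import all_boot all_order all_algebra.
From mathcomp Require Import all_classical all_reals all_analysis.
Set Implicit Arguments. Unset Strict Implicit. Unset Printing Implicit Defensive.
Import Order.TTheory GRing.Theory Num.Theory.
Import numFieldNormedType.Exports.
Local Open Scope classical_set_scope.
Local Open Scope ring_scope.

Definition pt (n : nat) := 'rV[int]_n.

Definition is_metric_on (R : realType) (n : nat) (X : set (pt n))
  (d : pt n -> pt n -> R) : Prop :=
  [/\ (forall x y, X x -> X y -> 0 <= d x y),
      (forall x y, X x -> X y -> (d x y = 0 <-> x = y)),
      (forall x y, X x -> X y -> d x y = d y x) &
      (forall x y z, X x -> X y -> X z -> d x z <= d x y + d y z)].

Definition d_cauchy (R : realType) (n : nat) (d : pt n -> pt n -> R)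
  (u : nat -> pt n) : Prop :=
  forall eps : R, 0 < eps -> exists N : nat,
    forall m k : nat, (N <= m)%N -> (N <= k)%N -> d (u m) (u k) < eps.

Definition d_converges (R : realType) (n : nat) (d : pt n -> pt n -> R)
  (u : nat -> pt n) (l : pt n) : Prop :=
  forall eps : R, 0 < eps -> exists N : nat,
    forall m : nat, (N <= m)%N -> d (u m) l < eps.

Definition complete_on (R : realType) (n : nat) (X : set (pt n))
  (d : pt n -> pt n -> R) : Prop :=
  forall u : nat -> pt n, (forall m, X (u m)) -> d_cauchy d u ->
    exists2 l, X l & d_converges d u l.

Definition lp_dist (R : realType) (n : nat) (p : \bar R) (x y : pt n) : R :=
  match p with
  | EFin r => (\sum_(i < n) (`|x ord0 i - y ord0 i|%:~R : R) `^ r) `^ r^-1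
  | _ => \big[Num.max/0]_(i < n) (`|x ord0 i - y ord0 i|%:~R : R)
  end.

Definition in_Psi (R : realType) (psi : R -> R) : Prop :=
  [/\ (forall t, 0 <= t -> 0 <= psi t),
      (forall s t, 0 <= s -> s <= t -> psi s <= psi t) &
      (forall t, 0 < t -> cvgn (series (fun k : nat => iter k.+1 psi t)))].

Definition alpha_admissible (R : realType) (n : nat) (X : set (pt n))
  (alpha : pt n -> pt n -> R) (S : pt n -> pt n) : Prop :=
  forall x y, X x -> X y -> 1 <= alpha x y -> 1 <= alpha (S x) (S y).

Definition Mxy (R : realType) (n : nat) (d : pt n -> pt n -> R)
  (T : pt n -> pt n) (x y : pt n) : R :=
  Num.max (d x y) (Num.max ((d x (T x) + d y (T y)) / 2)
                           ((d x (T y) + d y (T x)) / 2)).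

Definition gen_alpha_psi_expansive (R : realType) (n : nat) (X : set (pt n))
  (d : pt n -> pt n -> R) (T : pt n -> pt n)
  (alpha : pt n -> pt n -> R) (psi : R -> R) : Prop :=
  [/\ (forall x y, X x -> X y -> 0 <= alpha x y),
      in_Psi psi &
      (forall x y, X x -> X y -> alpha x y * Mxy d T x y <= psi (d (T x) (T y)))].

(* Main.v *)
Require Import Defs.
From HB Require Import structures.
From mathcomp Require Import all_boot all_order all_algebra.
From mathcomp Require Import all_classical all_reals all_analysis.
From mathcomp Require Import lra.
Import Order.TTheory GRing.Theory Num.Theory.
Import numFieldNormedType.Exports.
Local Open Scope classical_set_scope.
Local Open Scope ring_scope.
Set Implicit Arguments. Unset Strict Implicit.

Lemma lp_ge1 (R : realType) (n : nat) (p : \bar R) (x y : pt n) :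
  (1 <= p)%E -> x <> y -> 1 <= lp_dist p x y.
Proof.
move=> p1 xy.
have [i Hi] : exists i, x ord0 i != y ord0 i.
  apply: contrapT => H; apply: xy; apply/matrixP => a b.
  rewrite (ord1 a); apply/eqP/negPn/negP => Hb; apply: H; by exists b.
have h1 : (1 : R) <= (`|x ord0 i - y ord0 i|%:~R : R).
  by rewrite ler1z -gtz0_ge1 normr_gt0 subr_eq0.
case: p p1 => [r| |] //= p1.
- rewrite lee_fin in p1.
  have hs : 1 <= \sum_(i0 < n) (`|x ord0 i0 - y ord0 i0|%:~R : R) `^ r.
    rewrite (bigD1 i) //=.
    have t1 : 1 <= (`|x ord0 i - y ord0 i|%:~R : R) `^ r.
      have r0 : 0 <= r by lra.
      by have := ler_powR h1 r0; rewrite powRr0.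
    have t2 : 0 <= \sum_(i0 < n | i0 != i) (`|x ord0 i0 - y ord0 i0|%:~R : R) `^ r.
      by apply: sumr_ge0 => j _; apply: powR_ge0.
    lra.
  have r0 : 0 <= r^-1 by rewrite invr_ge0; lra.
  by have := ler_powR hs r0; rewrite powRr0.
- apply: le_trans h1 _.
  exact: (le_bigmax 0 (fun i0 : 'I_n => (`|x ord0 i0 - y ord0 i0|%:~R : R)) i).
Qed.

Lemma discrete_X (R : realType) (n : nat) (X : set (pt n)) (d : pt n -> pt n -> R) :
  is_metric_on X d ->
  (finite_set X \/
   exists p : \bar R, (1 <= p)%E /\ forall x y, X x -> X y -> d x y = lp_dist p x y) ->
  exists2 delta : R, 0 < delta & forall x y, X x -> X y -> d x y < delta -> x = y.
Proof.
move=> [d0 deq dsym dtri] [fin|[p [p1 Hp]]].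
- have [s Hs] := (finite_seqP X).1 fin.
  have pos : forall x y, X x -> X y -> x != y -> 0 < d x y.
    move=> x y Xx Xy xy; rewrite lt_neqAle d0 // andbT eq_sym.
    apply/negP => /eqP /(deq _ _ Xx Xy) e; by rewrite e eqxx in xy.
  exists (\big[Num.min/1]_(x <- s) \big[Num.min/1]_(y <- s | (x \in s) && (y \in s) && (x != y)) d x y).
    apply: lt_bigmin => // x _; apply: lt_bigmin => // y /andP[/andP[xs ys] xy].
    by apply: pos => //; rewrite Hs.
  move=> x y Xx Xy H; apply/eqP/negPn/negP => xy.
  have xs : x \in s by move: Xx; rewrite Hs.
  have ys : y \in s by move: Xy; rewrite Hs.
  move: H; apply/negP; rewrite -leNgt.
  apply: le_trans (ge_bigmin_seq 1 x xpredT _ xs isT) _.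
  by apply: (ge_bigmin_seq 1 y) => //; rewrite xs ys xy.
- exists 1 => // x y Xx Xy H; apply: contrapT => xy.
  by move: H; rewrite Hp // ltNge (lp_ge1 p1 xy).
Qed.

Theorem theorem4p9 (R : realType) (n : nat) (X : set (pt n))
  (kappa : pt n -> pt n -> Prop) (d : pt n -> pt n -> R)
  (T Tinv : pt n -> pt n) (alpha : pt n -> pt n -> R) (psi : R -> R) :
  (0 < n)%N ->
  is_metric_on X d ->
  complete_on X d ->
  (finite_set X \/
   exists p : \bar R, (1 <= p)%E /\ forall x y, X x -> X y -> d x y = lp_dist p x y) ->
  (forall x, X x -> X (T x)) ->
  (forall x, X x -> X (Tinv x)) ->
  (forall x, X x -> T (Tinv x) = x) ->
  (forall x, X x -> Tinv (T x) = x) ->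
  gen_alpha_psi_expansive X d T alpha psi ->
  alpha_admissible X alpha Tinv ->
  (exists x0, X x0 /\ 1 <= alpha x0 (Tinv x0)) ->
  exists x, X x /\ T x = x.
Proof.
move=> _ met _ hdisc XT XTi TTi TiT [a0 [psi0 psimon psiser] exp] adm [x0 [Xx0 ax0]].
have [delta dpos ddisc] := discrete_X met hdisc.
have [d0 deq dsym dtri] := met.
pose x k := iter k Tinv x0.
have HX : forall k, X (x k) by elim => [|k IH] //=; apply: XTi.
have Ha : forall k, 1 <= alpha (x k) (x k.+1).
  elim => [|k IH] //; exact: (adm _ _ (HX k) (HX k.+1) IH).
have key : forall u v, X u -> X v -> 1 <= alpha (Tinv u) (Tinv v) ->
    d (Tinv u) (Tinv v) <= psi (d u v).
  move=> u v Xu Xv au.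
  have := exp _ _ (XTi _ Xu) (XTi _ Xv); rewrite !TTi //.
  have hM : d (Tinv u) (Tinv v) <= Mxy d T (Tinv u) (Tinv v) by rewrite /Mxy le_max lexx.
  have hd : 0 <= d (Tinv u) (Tinv v) by apply: d0; apply: XTi.
  nra.
pose t := d (x 0) (x 1).
have Hd : forall k, d (x k) (x k.+1) <= iter k psi t.
  elim => [|k IH] //=.
  apply: le_trans (key _ _ (HX k) (HX k.+1) (Ha k.+1)) _.
  by apply: psimon => //; apply: d0.
have t0 : 0 <= t by apply: d0.
case: (eqVneq t 0) => [tz|tnz].
  exists x0; split => //.
  have e : x0 = Tinv x0 by apply/(deq _ _ Xx0 (XTi _ Xx0)).
  by rewrite {1}e TTi.
have tpos : 0 < t by rewrite lt_neqAle eq_sym tnz t0.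
have := cvgr0_norm_lt _ (cvg_series_cvg_0 (psiser t tpos)) _ dpos.
move=> [N _ HN].
have hN := HN N (leqnn N).
have e : x N.+1 = x N.+2.
  apply: ddisc; [exact: HX|exact: HX|].
  apply: le_lt_trans (Hd N.+1) _.
  by apply: le_lt_trans hN; apply: ler_norm.
exists (x N.+1); split; first exact: HX.
by rewrite {1}e; exact: (TTi _ (HX N.+1)).
Qed.
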